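(* Let $\mathcal X$ be a proper CAT(0) cube complex on which $G$ acts properly and cocompactly. Let $Y_1,Y_2$ be convex subcomplexes of $\mathcal X$ and let $G_i=\mathrm{Stab}_G(Y_i)$, and suppose $G_i$ acts cocompactly on $Y_i$ for $i=1,2$. Then $G_1$ and $G_2$ are commensurable if and only if the $G_1$-essential core $\widehat{Y_1}$ and the $G_2$-essential core $\widehat{Y_2}$ are parallel.
   Context: Two convex subcomplexes are parallel if exactly the same hyperplanes intersect them. A hyperplane $H$ crossing a convex subcomplex $F$ is $G'$-essential (for $G'$ preserving $F$) if for any $0$-cube $x\in F$, each halfspace of $H$ contains points of $G'x$ arbitrarily far from $H$; $G'$ acts essentially on $F$ if every hyperplane crossing $F$ is $G'$-essential. If $G'$ acts cocompactly on $F$, the $G'$-essential core $\widehat F_{G'}$ is a $G'$-invariant convex subcomplex of $F$ at finite Hausdorff distance from $F$, crossed exactly by the hyperplanes essential in $F$, on which $G'$ acts essentially and cocompactly (Caprace–Sageev); it is well defined up to parallelism. Subgroups are commensurable if their intersection has finite index in each. *)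

(* Defs.v *)
(* CAT(0) cube complexes are modelled combinatorially through
   their 1-skeleta, i.e. median graphs (Chepoi/Roller); hyperplanes through
   Djokovic-Winkler classes of edges; halfspaces as the two sides of an edge. *)
From Stdlib Require Import Arith List Classical.
Set Implicit Arguments.

Section Graph.
Variable V : Type.
Variable adj : V -> V -> Prop.

Inductive Walk : V -> V -> nat -> Prop :=
| walk0 x : Walk x x 0
| walkS x y z n : adj x y -> Walk y z n -> Walk x z (S n).

Definition dist (x y : V) (n : nat) : Prop :=
  Walk x y n /\ forall m, Walk x y m -> n <= m.

Definition in_interval (x y z : V) : Prop :=
  exists a b c, dist x z a /\ dist z y b /\ dist x y c /\ a + b = c.

Definition median_graph : Prop :=
  (forall x y, adj x y -> adj y x) /\
  (forall x, ~ adj x x) /\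
  (forall x y, exists n, Walk x y n) /\
  (forall x y z, exists m,
      (in_interval x y m /\ in_interval y z m /\ in_interval x z m) /\
      forall m', in_interval x y m' /\ in_interval y z m' /\ in_interval x z m' -> m' = m).

Definition locally_finite : Prop :=
  forall x, exists l : list V, forall y, adj x y -> In y l.

Definition proper_CAT0_cube_complex : Prop := median_graph /\ locally_finite.

(* convex subcomplexes = (nonempty) convex vertex sets; the subcomplex is the
   full subcomplex spanned by them *)
Definition convex_subcomplex (Y : V -> Prop) : Prop :=
  (exists y, Y y) /\ forall x y z, Y x -> Y y -> in_interval x y z -> Y z.

(* Djokovic-Winkler relation: edge ab and edge cd are dual to the same
   hyperplane *)
Definition theta (a b c d : V) : Prop :=
  exists ac bd ad bc, dist a c ac /\ dist b d bd /\ dist a d ad /\ dist b c bc /\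
    ac + bd <> ad + bc.

Definition crosses (a b : V) (Y : V -> Prop) : Prop :=
  exists c d, Y c /\ Y d /\ adj c d /\ theta a b c d.

Definition parallel (Y Z : V -> Prop) : Prop :=
  forall a b, adj a b -> (crosses a b Y <-> crosses a b Z).

(* the halfspace of the hyperplane dual to (a,b) containing a *)
Definition halfspace (a b x : V) : Prop :=
  exists m n, dist x a m /\ dist x b n /\ m < n.

Definition far_from (a b : V) (n : nat) (y : V) : Prop :=
  forall z k, halfspace b a z -> dist y z k -> n <= k.

Definition finite_hausdorff (Y Z : V -> Prop) : Prop :=
  exists R, (forall y, Y y -> exists z k, Z z /\ dist y z k /\ k <= R) /\
            (forall z, Z z -> exists y k, Y y /\ dist z y k /\ k <= R).
End Graph.

Section Groups.
Variable G : Type.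
Variable mul : G -> G -> G.
Variable inv : G -> G.
Variable e : G.

Definition is_group : Prop :=
  (forall x y z, mul x (mul y z) = mul (mul x y) z) /\
  (forall x, mul e x = x) /\ (forall x, mul x e = x) /\
  (forall x, mul (inv x) x = e) /\ (forall x, mul x (inv x) = e).

Definition finite_index (H K : G -> Prop) : Prop :=
  exists l : list G, forall k, K k -> exists s h, In s l /\ H h /\ k = mul s h.

Definition commensurable (H K : G -> Prop) : Prop :=
  finite_index (fun g => H g /\ K g) H /\ finite_index (fun g => H g /\ K g) K.

Variable V : Type.
Variable adj : V -> V -> Prop.
Variable act : G -> V -> V.

Definition is_graph_action : Prop :=
  (forall v, act e v = v) /\
  (forall g h v, act (mul g h) v = act g (act h v)) /\
  (forall g x y, adj x y <-> adj (act g x) (act g y)).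

(* proper action on a locally finite complex: finite vertex stabilisers *)
Definition acts_properly : Prop :=
  forall v, exists l : list G, forall g, act g v = v -> In g l.

(* cocompact action of the subgroup G' on F: finitely many vertex orbits *)
Definition acts_cocompactly_on (G' : G -> Prop) (F : V -> Prop) : Prop :=
  exists l : list V, forall v, F v -> exists w g, In w l /\ G' g /\ v = act g w.

Definition stab (Y : V -> Prop) (g : G) : Prop :=
  forall v, Y v <-> Y (act g v).

Definition invariant (G' : G -> Prop) (Y : V -> Prop) : Prop :=
  forall g v, G' g -> Y v -> Y (act g v).

Definition essential (G' : G -> Prop) (F : V -> Prop) (a b : V) : Prop :=
  forall x, F x -> forall n,
    (exists g, G' g /\ halfspace adj a b (act g x) /\ far_from adj a b n (act g x)) /\
    (exists g, G' g /\ halfspace adj b a (act g x) /\ far_from adj b a n (act g x)).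

Definition acts_essentially (G' : G -> Prop) (F : V -> Prop) : Prop :=
  forall a b, adj a b -> crosses adj a b F -> essential G' F a b.

Definition essential_core (G' : G -> Prop) (F C : V -> Prop) : Prop :=
  convex_subcomplex adj C /\
  (forall v, C v -> F v) /\
  invariant G' C /\
  finite_hausdorff adj C F /\
  (forall a b, adj a b ->
     (crosses adj a b C <-> (crosses adj a b F /\ essential G' F a b))) /\
  acts_essentially G' C /\
  acts_cocompactly_on G' C.
End Groups.

(* Main.v *)
Require Import Defs.
From Stdlib Require Import Arith List Classical Lia ClassicalEpsilon.

Lemma min_ex (P : nat -> Prop) n : P n -> exists m, P m /\ forall k, P k -> m <= k.
Proof.
  induction n as [n IH] using lt_wf_ind. intros Hn.
  destruct (classic (exists k, k < n /\ P k)) as [[k [Hk Pk]]|Hno].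
  - exact (IH k Hk Pk).
  - exists n. split; auto. intros k Pk. destruct (le_lt_dec n k); auto.
    exfalso; apply Hno; eauto.
Qed.

Section Med.
Variable V : Type.
Variable adj : V -> V -> Prop.
Hypothesis Hm : median_graph adj.

Lemma adj_sym x y : adj x y -> adj y x.
Proof. destruct Hm as [H _]; auto. Qed.
Lemma adj_irr x : ~ adj x x.
Proof. destruct Hm as [_ [H _]]; auto. Qed.

Lemma walk_app x y z m n : Walk adj x y m -> Walk adj y z n -> Walk adj x z (m + n).
Proof. induction 1; simpl; auto. intros. econstructor; eauto. Qed.

Lemma walk_rev x y n : Walk adj x y n -> Walk adj y x n.
Proof.
  induction 1. constructor.
  replace (S n) with (n + 1) by lia. eapply walk_app; eauto.
  econstructor. apply adj_sym; eauto. constructor.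
Qed.

Lemma dist_ex x y : exists n, dist adj x y n.
Proof.
  destruct Hm as [_ [_ [Hc _]]]. destruct (Hc x y) as [n Hn].
  destruct (min_ex (Walk adj x y) n Hn) as [m [H1 H2]]. exists m; split; auto.
Qed.

Definition D x y : nat := proj1_sig (constructive_indefinite_description _ (dist_ex x y)).
Lemma D_spec x y : dist adj x y (D x y).
Proof. unfold D. destruct (constructive_indefinite_description _ _); auto. Qed.
Lemma D_uniq x y n : dist adj x y n -> D x y = n.
Proof.
  intros [H1 H2]. destruct (D_spec x y) as [H3 H4].
  specialize (H2 _ H3). specialize (H4 _ H1). lia.
Qed.
Lemma D_walk x y n : Walk adj x y n -> D x y <= n.
Proof. intros W. destruct (D_spec x y) as [_ H]. auto. Qed.
Lemma D_refl x : D x x = 0.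
Proof. pose proof (D_walk _ _ _ (walk0 adj x)). lia. Qed.
Lemma D_zero x y : D x y = 0 -> x = y.
Proof.
  intros H. destruct (D_spec x y) as [W _]. rewrite H in W. inversion W; auto.
Qed.
Lemma D_sym x y : D x y = D y x.
Proof.
  destruct (D_spec x y) as [W1 _]. destruct (D_spec y x) as [W2 _].
  apply walk_rev in W1. apply walk_rev in W2.
  apply D_walk in W1. apply D_walk in W2. lia.
Qed.
Lemma D_tri x y z : D x z <= D x y + D y z.
Proof.
  destruct (D_spec x y) as [W1 _]. destruct (D_spec y z) as [W2 _].
  apply D_walk. eapply walk_app; eauto.
Qed.
Lemma D_adj x y : adj x y -> D x y = 1.
Proof.
  intros H. assert (D x y <= 1). { apply D_walk. econstructor; eauto. constructor. }
  assert (D x y <> 0). { intro Hz. apply D_zero in Hz. subst. eapply adj_irr; eauto. }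
  lia.
Qed.
Lemma D_step x z n : D x z = S n -> exists x', adj x x' /\ D x' z = n.
Proof.
  intros H. destruct (D_spec x z) as [W _]. rewrite H in W.
  inversion W as [|x0 y z0 n0 Ha Wy]; subst. exists y. split; auto.
  pose proof (D_walk _ _ _ Wy). pose proof (D_tri x y z).
  rewrite (D_adj _ _ Ha) in *. lia.
Qed.
Lemma D_lip x y z : adj x y -> D x z <= S (D y z).
Proof. intros H. pose proof (D_tri x y z). rewrite (D_adj _ _ H) in H0. lia. Qed.

Lemma interval_D x y z : in_interval adj x y z <-> D x z + D z y = D x y.
Proof.
  split.
  - intros [a [b [c [H1 [H2 [H3 H4]]]]]].
    apply D_uniq in H1; apply D_uniq in H2; apply D_uniq in H3. lia.
  - intros H. exists (D x z), (D z y), (D x y). split; [apply D_spec|split; [apply D_spec|split; [apply D_spec|exact H]]].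
Qed.

Definition med3 x y z m := D x m + D m y = D x y /\ D y m + D m z = D y z /\ D x m + D m z = D x z.

Lemma med_ex x y z : exists m, med3 x y z m.
Proof.
  destruct Hm as [_ [_ [_ H]]]. destruct (H x y z) as [m [[H1 [H2 H3]] _]].
  exists m. unfold med3. rewrite <- !interval_D. auto.
Qed.
Lemma med_uniq x y z m1 m2 : med3 x y z m1 -> med3 x y z m2 -> m1 = m2.
Proof.
  destruct Hm as [_ [_ [_ H]]]. destruct (H x y z) as [m [_ U]].
  unfold med3; rewrite <- !interval_D. intros A B.
  rewrite (U _ A), (U _ B). auto.
Qed.

Lemma bip a b x : adj a b -> D x a <> D x b.
Proof.
  intros Hab. destruct (med_ex x a b) as [m [H1 [H2 H3]]].
  rewrite (D_adj _ _ Hab) in H2.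
  assert (D a m = 0 \/ D m b = 0) as [E|E] by lia.
  - apply D_zero in E; subst m. pose proof (D_adj _ _ Hab). lia.
  - apply D_zero in E; subst m. pose proof (D_adj _ _ (adj_sym _ _ Hab)). lia.
Qed.

Lemma side a b x : adj a b -> D x b = S (D x a) \/ D x a = S (D x b).
Proof.
  intros H. pose proof (bip a b x H).
  pose proof (D_tri x a b). pose proof (D_tri x b a).
  rewrite (D_adj _ _ H) in H1. rewrite (D_adj _ _ (adj_sym _ _ H)) in H2. lia.
Qed.

Lemma hs_convex n : forall a b x y z, adj a b -> D x y = n -> D x a < D x b -> D y a < D y b ->
  D x z + D z y = D x y -> D z a < D z b.
Proof.
  induction n as [n IH] using lt_wf_ind.
  intros a b x y z Hab Hn Hx Hy Hz.
  destruct (lt_dec (D z a) (D z b)) as [|Hnz]; auto. exfalso.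
  assert (Hzs : D z b < D z a) by (pose proof (side a b z Hab); lia).
  assert (Hxz : D x z <> 0). { intro E. apply D_zero in E. subst. lia. }
  destruct (D x z) as [|k] eqn:Exz; [lia|].
  destruct (D_step _ _ _ Exz) as [x' [Hxx' Hx'z]].
  pose proof (D_adj _ _ Hxx') as E1.
  pose proof (D_tri x' z y). pose proof (D_tri x x' y). 
  assert (Hx'y : D x' y = n - 1) by lia.
  assert (Hx' : D x' b < D x' a).
  { destruct (lt_dec (D x' a) (D x' b)) as [L|L].
    - exfalso. assert (D z a < D z b). { apply (IH (n-1)) with (x:=x') (y:=y); auto; lia. } lia.
    - pose proof (side a b x' Hab). lia. }
  assert (Hx'yne : D y x' <> 0). { intro E. apply D_zero in E. subst. lia. }
  rewrite D_sym in Hx'y.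
  destruct (D y x') as [|j] eqn:Eyx'; [lia|].
  destruct (D_step _ _ _ Eyx') as [y' [Hyy' Hy'x']].
  pose proof (D_adj _ _ Hyy') as E2.
  pose proof (D_tri x x' y'). pose proof (D_tri x y' y). pose proof (D_sym x' y').
  pose proof (D_sym y y').
  assert (Hxy' : D x y' = n - 1) by lia.
  assert (Hy' : D y' b < D y' a).
  { destruct (lt_dec (D y' a) (D y' b)) as [L|L].
    - exfalso. assert (D x' a < D x' b). { apply (IH (n-1)) with (x:=x) (y:=y'); auto; lia. } lia.
    - pose proof (side a b y' Hab). lia. }
  pose proof (side a b x Hab). pose proof (side a b y Hab).
  pose proof (D_lip x x' a Hxx'). pose proof (D_lip x' x a (adj_sym _ _ Hxx')).
  pose proof (D_lip x x' b Hxx'). pose proof (D_lip x' x b (adj_sym _ _ Hxx')).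
  pose proof (D_lip y y' a Hyy'). pose proof (D_lip y' y a (adj_sym _ _ Hyy')).
  pose proof (D_lip y y' b Hyy'). pose proof (D_lip y' y b (adj_sym _ _ Hyy')).
  destruct (med_ex x' y' b) as [w [W1 [W2 W3]]].
  destruct (med_ex x y a) as [m [M1 [M2 M3]]].
  pose proof (D_tri x x' w). pose proof (D_tri y y' w).
  pose proof (D_tri x w b). pose proof (D_tri y w b). pose proof (D_tri x w y).
  pose proof (D_tri m a b). pose proof (D_adj _ _ Hab).
  pose proof (D_tri x m b). pose proof (D_tri y m b).
  pose proof (D_sym w y). pose proof (D_sym w y'). pose proof (D_sym m y).
  pose proof (D_sym x' x). pose proof (D_sym y' y).
  assert (Mw : med3 x y b w) by (unfold med3; lia).
  assert (Mm : med3 x y b m) by (unfold med3; lia).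
  pose proof (med_uniq _ _ _ _ _ Mw Mm). subst w.
  assert (D m b < D m a).
  { apply (IH (n-2)) with (x:=x') (y:=y'); auto; try lia. apply adj_sym; auto. }
  lia.
Qed.

Lemma theta_D a b c d : theta adj a b c d <-> D a c + D b d <> D a d + D b c.
Proof.
  split.
  - intros [ac [bd [ad [bc [H1 [H2 [H3 [H4 H5]]]]]]]].
    apply D_uniq in H1; apply D_uniq in H2; apply D_uniq in H3; apply D_uniq in H4. lia.
  - intros H. exists (D a c), (D b d), (D a d), (D b c). repeat split; try apply D_spec; auto.
Qed.
Lemma halfspace_D a b x : halfspace adj a b x <-> D x a < D x b.
Proof.
  split.
  - intros [m [n [H1 [H2 H3]]]]. apply D_uniq in H1; apply D_uniq in H2. lia.
  - intros H. exists (D x a), (D x b). repeat split; try apply D_spec; auto.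
Qed.
Lemma far_D a b n y : far_from adj a b n y <-> forall z, D z b < D z a -> n <= D y z.
Proof.
  split.
  - intros H z Hz. apply (H z). apply halfspace_D; auto. apply D_spec.
  - intros H z k Hz Hk. apply D_uniq in Hk. subst. apply H. apply halfspace_D; auto.
Qed.
Lemma convex_D C x y z : convex_subcomplex adj C -> C x -> C y -> D x z + D z y = D x y -> C z.
Proof. intros [_ H] Hx Hy Hz. apply (H x y z); auto. apply interval_D; auto. Qed.

Lemma par_step C1 C2 x x' y : convex_subcomplex adj C2 -> parallel adj C1 C2 ->
  C1 x -> C1 x' -> adj x' x -> C2 y -> exists y', C2 y' /\ D x y' <= D x' y.
Proof.
  intros HC2 Hpar Hx Hx' Ha Hy.
  destruct (le_lt_dec (D x y) (D x' y)) as [L|L]. { exists y; auto. }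
  pose proof (D_lip x x' y (adj_sym _ _ Ha)).
  assert (Hcr : crosses adj x' x C1).
  { exists x', x. repeat split; auto. apply theta_D.
    rewrite !D_refl. pose proof (D_adj _ _ Ha). pose proof (D_sym x' x). lia. }
  apply (Hpar _ _ Ha) in Hcr. destruct Hcr as [c [d [Hc [Hd [Hcd Hth]]]]].
  apply theta_D in Hth.
  assert (Hw : exists w, C2 w /\ D w x < D w x').
  { pose proof (side x' x c Ha). pose proof (side x' x d Ha).
    rewrite (D_sym x' c), (D_sym x d), (D_sym x' d), (D_sym x c) in Hth.
    destruct H0 as [H0|H0]; [|exists c; split; auto; lia].
    destruct H1 as [H1|H1]; [lia|exists d; split; auto; lia]. }
  destruct Hw as [w [Hw Hwx]].
  destruct (med_ex x y w) as [m [M1 [M2 M3]]].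
  assert (Cm : C2 m). { apply (convex_D C2 y w m); auto; pose proof (D_sym m y); lia. }
  assert (Hmx : D m x < D m x').
  { pose proof (D_adj _ _ (adj_sym _ _ Ha)). pose proof (D_refl x). pose proof (D_sym m w).
    apply (hs_convex (D x w) x x' x w m); auto; try lia. apply adj_sym; auto. }
  assert (D m y <> 0). { intro E. apply D_zero in E. subst m.
    rewrite (D_sym y x), (D_sym y x') in Hmx. lia. }
  exists m. split; auto. lia.
Qed.

Lemma par_near C1 C2 : convex_subcomplex adj C1 -> convex_subcomplex adj C2 -> parallel adj C1 C2 ->
  exists R, forall x, C1 x -> exists y, C2 y /\ D x y <= R.
Proof.
  intros HC1 HC2 Hpar.
  destruct (proj1 HC1) as [x0 Hx0]. destruct (proj1 HC2) as [y0 Hy0].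
  exists (D x0 y0).
  assert (forall k x, C1 x -> D x x0 = k -> exists y, C2 y /\ D x y <= D x0 y0) as K.
  { induction k as [|k IH]; intros x Hx Ek.
    - apply D_zero in Ek. subst. eauto.
    - destruct (D_step _ _ _ Ek) as [x' [Hxx' Hx'x0]].
      assert (C1 x'). { apply (convex_D C1 x x0 x'); auto. rewrite (D_adj _ _ Hxx'). lia. }
      destruct (IH x' H Hx'x0) as [y [Hy Hd]].
      destruct (par_step C1 C2 x x' y) as [y' [Hy' Hd']]; auto. apply adj_sym; auto.
      exists y'. split; auto. lia. }
  intros x Hx. eapply K; eauto.
Qed.

Lemma cross_path Y a b : convex_subcomplex adj Y -> adj a b -> forall k u v, D u v = k -> Y u -> Y v ->
  D u a < D u b -> D v b < D v a -> crosses adj a b Y.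
Proof.
  intros HY Hab. induction k as [|k IH]; intros u v Ek Hu Hv Hua Hvb.
  - apply D_zero in Ek. subst. lia.
  - destruct (D_step _ _ _ Ek) as [u' [Huu' Hu'v]].
    assert (Y u'). { apply (convex_D Y u v u'); auto. rewrite (D_adj _ _ Huu'). lia. }
    destruct (side a b u' Hab) as [S|S].
    + apply (IH u' v); auto. lia.
    + exists u, u'. repeat split; auto. apply theta_D.
      pose proof (side a b u Hab).
      rewrite (D_sym a u), (D_sym b u'), (D_sym a u'), (D_sym b u). lia.
Qed.

End Med.

Section Grp.
Variable G : Type.
Variables (mul : G -> G -> G) (inv : G -> G) (e : G).
Variable V : Type.
Variable adj : V -> V -> Prop.
Variable act : G -> V -> V.
Hypothesis HG : is_group mul inv e.
Hypothesis Hact : is_graph_action mul e adj act.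
Hypothesis Hm : median_graph adj.

Local Notation DD := (D V adj Hm).

Lemma massoc x y z : mul x (mul y z) = mul (mul x y) z.
Proof. destruct HG as [H _]; auto. Qed.
Lemma mel x : mul e x = x.
Proof. destruct HG as [_ [H _]]; auto. Qed.
Lemma mer x : mul x e = x.
Proof. destruct HG as [_ [_ [H _]]]; auto. Qed.
Lemma minl x : mul (inv x) x = e.
Proof. destruct HG as [_ [_ [_ [H _]]]]; auto. Qed.
Lemma minr x : mul x (inv x) = e.
Proof. destruct HG as [_ [_ [_ [_ H]]]]; auto. Qed.

Lemma inv_uniq x y : mul x y = e -> inv x = y.
Proof.
  intros H. rewrite <- (mer (inv x)), <- H, massoc, minl, mel. auto.
Qed.
Lemma inv_inv x : inv (inv x) = x.
Proof. apply inv_uniq. apply minl. Qed.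
Lemma inv_mul s k : inv (mul s k) = mul (inv k) (inv s).
Proof.
  apply inv_uniq. rewrite massoc, <- (massoc s k), minr, mer, minr. auto.
Qed.

Lemma act_e v : act e v = v.
Proof. destruct Hact as [H _]; auto. Qed.
Lemma act_mul g h v : act (mul g h) v = act g (act h v).
Proof. destruct Hact as [_ [H _]]; auto. Qed.
Lemma act_adj g x y : adj x y -> adj (act g x) (act g y).
Proof. destruct Hact as [_ [_ H]]. apply H. Qed.
Lemma act_invl g x : act (inv g) (act g x) = x.
Proof. rewrite <- act_mul, minl, act_e. auto. Qed.
Lemma act_invr g x : act g (act (inv g) x) = x.
Proof. rewrite <- act_mul, minr, act_e. auto. Qed.

Lemma walk_act g x y n : Walk adj x y n -> Walk adj (act g x) (act g y) n.
Proof. induction 1; econstructor; eauto using act_adj. Qed.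
Lemma D_act g x y : DD (act g x) (act g y) = DD x y.
Proof.
  destruct (D_spec V adj Hm x y) as [W1 _].
  destruct (D_spec V adj Hm (act g x) (act g y)) as [W2 _].
  apply (walk_act g) in W1. apply (walk_act (inv g)) in W2.
  rewrite !act_invl in W2.
  apply (D_walk V adj Hm) in W1. apply (D_walk V adj Hm) in W2. lia.
Qed.

Lemma stab_mul Y g h : stab act Y g -> stab act Y h -> stab act Y (mul g h).
Proof. intros Hg Hh v. rewrite act_mul. specialize (Hh v). specialize (Hg (act h v)). tauto. Qed.
Lemma stab_inv Y g : stab act Y g -> stab act Y (inv g).
Proof. intros Hg v. specialize (Hg (act (inv g) v)). rewrite act_invr in Hg. tauto. Qed.

Lemma nbr_list : locally_finite adj -> forall l, exists L, forall u v, In u l -> adj u v -> In v L.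
Proof.
  intros Hl. induction l as [|u0 l IH].
  - exists nil. intros u v [].
  - destruct IH as [L HL]. destruct (Hl u0) as [N HN]. exists (N ++ L).
    intros u v [<-|Hu] Ha; apply in_or_app; eauto.
Qed.

Lemma balls : locally_finite adj -> forall f r, exists l, forall v, DD f v <= r -> In v l.
Proof.
  intros Hl f. induction r as [|r IH].
  - exists (f :: nil). intros v Hv. assert (DD f v = 0) by lia.
    apply (D_zero V adj Hm) in H. subst. left; auto.
  - destruct IH as [l Hlr]. destruct (nbr_list Hl l) as [L HL]. exists (l ++ L).
    intros v Hv. apply in_or_app.
    destruct (le_lt_dec (DD f v) r) as [A|A]; [left; auto|right].
    assert (DD v f = S r) by (rewrite (D_sym V adj Hm); lia).
    destruct (D_step V adj Hm _ _ _ H) as [v' [Hvv' Hv'f]].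
    apply (HL v' v). apply Hlr. rewrite (D_sym V adj Hm); lia.
    apply (adj_sym V adj Hm); auto.
Qed.

Lemma balls_list : locally_finite adj -> forall F r, exists B, forall f v, In f F -> DD f v <= r -> In v B.
Proof.
  intros Hl F r. induction F as [|f0 F IH].
  - exists nil. intros f v [].
  - destruct IH as [B HB]. destruct (balls Hl f0 r) as [l Hl0]. exists (l ++ B).
    intros f v [<-|Hf] Hd; apply in_or_app; eauto.
Qed.

Lemma preimg : acts_properly act -> forall p q, exists l, forall g, act g p = q -> In g l.
Proof.
  intros Hp p q. destruct (classic (exists g0, act g0 p = q)) as [[g0 Hg0]|Hno].
  - destruct (Hp p) as [l0 Hl0]. exists (map (mul g0) l0). intros g Hg.
    replace g with (mul g0 (mul (inv g0) g)).
    + apply in_map. apply Hl0. rewrite act_mul, Hg, <- Hg0, act_invl. auto.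
    + rewrite massoc, minr, mel. auto.
  - exists nil. intros g Hg. exfalso; eauto.
Qed.

Lemma preimg_list : acts_properly act -> forall p B, exists l, forall g, In (act g p) B -> In g l.
Proof.
  intros Hp p B. induction B as [|q B IH].
  - exists nil. intros g [].
  - destruct IH as [l Hl]. destruct (preimg Hp p q) as [l0 Hl0]. exists (l0 ++ l).
    intros g [Hq|Hq]; apply in_or_app; eauto.
Qed.

Lemma reps (P : G -> G -> Prop) S : exists T, forall s, In s S -> (exists g, P s g) -> exists t, In t T /\ P s t.
Proof.
  induction S as [|s0 S IH].
  - exists nil. intros s [].
  - destruct IH as [T HT]. destruct (classic (exists g, P s0 g)) as [[g0 Hg0]|Hno].
    + exists (g0 :: T). intros s [<-|Hs] Hex.
      * exists g0; split; [left|]; auto.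
      * destruct (HT s Hs Hex) as [t [Ht Pt]]. exists t; split; [right|]; auto.
    + exists T. intros s [<-|Hs] Hex; [exfalso; auto|]. auto.
Qed.

Lemma bound_list (f : G -> nat) l : exists M, forall t, In t l -> f t <= M.
Proof.
  induction l as [|t0 l [M HM]].
  - exists 0. intros t [].
  - exists (f t0 + M). intros t [<-|Ht]; [lia|]. specialize (HM t Ht). lia.
Qed.

Lemma coset_fin (Y1 Y2 : V -> Prop) R p : locally_finite adj -> acts_properly act ->
  acts_cocompactly_on act (stab act Y2) Y2 -> Y1 p ->
  (forall x, Y1 x -> exists y, Y2 y /\ DD x y <= R) ->
  finite_index mul (fun g => stab act Y1 g /\ stab act Y2 g) (stab act Y1).
Proof.
  intros Hl Hp [F2 HF2] Hpy Hnear.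
  destruct (balls_list Hl F2 R) as [B HB].
  destruct (preimg_list Hp p B) as [S HS].
  assert (Dec : forall g, stab act Y1 g -> exists h s, stab act Y2 h /\ In s S /\ g = mul h s).
  { intros g Hg. assert (Y1 (act g p)) by (apply (Hg p); auto).
    destruct (Hnear _ H) as [y [Hy Hd]].
    destruct (HF2 y Hy) as [f [h [Hf [Hh ->]]]].
    exists h, (mul (inv h) g). split; auto. split.
    - apply HS. apply (HB f); auto. rewrite act_mul.
      rewrite <- (act_invl h f) at 1. rewrite D_act, (D_sym V adj Hm). auto.
    - rewrite massoc, minr, mel. auto. }
  destruct (reps (fun s t => stab act Y1 t /\ exists h, stab act Y2 h /\ inv t = mul h s) S) as [T HT].
  exists T. intros k Hk.
  destruct (Dec (inv k) (stab_inv _ _ Hk)) as [h [s [Hh [Hs Ek]]]].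
  destruct (HT s Hs) as [t [Ht [Gt [h' [Hh' Et]]]]]. { exists k; split; eauto. }
  exists t, (mul (inv t) k). split; auto. split.
  - split. apply stab_mul; auto. apply stab_inv; auto.
    assert (Es : s = mul (inv h) (inv k)). { rewrite Ek, massoc, minl, mel. auto. }
    rewrite Et, Es, <- !massoc, minl, mer. apply stab_mul; auto. apply stab_inv; auto.
  - rewrite massoc, minr, mel. auto.
Qed.

Lemma ess_one (G1 G2 : G -> Prop) Y1 a b y : adj a b ->
  (forall g, G1 g -> G1 (inv g)) -> (forall g, G2 g -> G2 (inv g)) ->
  finite_index mul (fun g => G1 g /\ G2 g) G1 -> Y1 y ->
  (forall N, exists g, G1 g /\ halfspace adj a b (act g y) /\ far_from adj a b N (act g y)) ->
  forall x n, exists g, G2 g /\ halfspace adj a b (act g x) /\ far_from adj a b n (act g x).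
Proof.
  intros Hab I1 I2 [l Hl] Hy Hess x n.
  destruct (bound_list (fun t => DD x (act (inv t) y)) l) as [M HM].
  destruct (Hess (n + 1 + M)) as [g [Hg [_ Hf]]].
  rewrite (far_D V adj Hm) in Hf.
  destruct (Hl (inv g) (I1 _ Hg)) as [s [k [Hs [[_ Hk] Eg]]]].
  assert (Eg' : g = mul (inv k) (inv s)) by (rewrite <- inv_mul, <- Eg, inv_inv; auto).
  assert (Hd : DD (act (inv k) x) (act g y) <= M).
  { rewrite Eg', act_mul, D_act. apply (HM s Hs). }
  assert (Hf' : forall z, DD z b < DD z a -> n + 1 <= DD (act (inv k) x) z).
  { intros z Hz. specialize (Hf z Hz).
    pose proof (D_tri V adj Hm (act g y) (act (inv k) x) z).
    pose proof (D_sym V adj Hm (act g y) (act (inv k) x)). lia. }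
  exists (inv k). split; auto. split.
  - apply (halfspace_D V adj Hm).
    destruct (side V adj Hm a b (act (inv k) x) Hab) as [S|S]; [lia|].
    specialize (Hf' (act (inv k) x)). rewrite (D_refl V adj Hm) in Hf'. lia.
  - apply (far_D V adj Hm). intros z Hz. specialize (Hf' z Hz). lia.
Qed.

Lemma cross_transfer Y1 Y2 C1 C2 a b : adj a b -> convex_subcomplex adj Y1 -> convex_subcomplex adj Y2 ->
  essential_core adj act (stab act Y1) Y1 C1 -> essential_core adj act (stab act Y2) Y2 C2 ->
  finite_index mul (fun g => stab act Y1 g /\ stab act Y2 g) (stab act Y1) ->
  crosses adj a b C1 -> crosses adj a b C2.
Proof.
  intros Hab HY1 HY2 [_ [_ [_ [_ [Hc1 _]]]]] [_ [_ [_ [_ [Hc2 _]]]]] Hfi Hcr.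
  apply (Hc1 a b Hab) in Hcr. destruct Hcr as [_ Hess].
  destruct (proj1 HY1) as [y Hy].
  assert (Ess : essential adj act (stab act Y2) Y2 a b).
  { intros x Hx n. split.
    - apply (ess_one (stab act Y1) (stab act Y2) Y1 a b y); auto; try apply stab_inv.
      intros N. apply (Hess y Hy N).
    - apply (ess_one (stab act Y1) (stab act Y2) Y1 b a y); auto; try apply stab_inv.
      apply (adj_sym V adj Hm); auto.
      intros N. apply (Hess y Hy N). }
  apply (Hc2 a b Hab). split; auto.
  destruct (proj1 HY2) as [x Hx].
  destruct (proj1 (Ess x Hx 0)) as [g1 [Hg1 [Hh1 _]]].
  destruct (proj2 (Ess x Hx 0)) as [g2 [Hg2 [Hh2 _]]].
  apply (halfspace_D V adj Hm) in Hh1. apply (halfspace_D V adj Hm) in Hh2.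
  apply (cross_path V adj Hm Y2 a b HY2 Hab (DD (act g1 x) (act g2 x)) (act g1 x) (act g2 x)); auto.
  apply (Hg1 x); auto. apply (Hg2 x); auto.
Qed.

End Grp.

Lemma fi_swap G (mul : G -> G -> G) (A B K : G -> Prop) :
  finite_index mul (fun g => A g /\ B g) K -> finite_index mul (fun g => B g /\ A g) K.
Proof.
  intros [l Hl]. exists l. intros k Hk. destruct (Hl k Hk) as [s [h [H1 [[H2 H3] H4]]]].
  exists s, h. auto.
Qed.

Lemma near_Y V adj (Hm : median_graph adj) (Y1 C1 C2 Y2 : V -> Prop) :
  convex_subcomplex adj C1 -> convex_subcomplex adj C2 -> parallel adj C1 C2 ->
  finite_hausdorff adj C1 Y1 -> finite_hausdorff adj C2 Y2 ->
  exists R, forall x, Y1 x -> exists y, Y2 y /\ D V adj Hm x y <= R.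
Proof.
  intros HC1 HC2 Hpar [R1 [_ H1]] [R2 [H2 _]].
  destruct (par_near V adj Hm C1 C2 HC1 HC2 Hpar) as [R HR].
  exists (R1 + R + R2). intros x Hx.
  destruct (H1 x Hx) as [c1 [k1 [Hc1 [Hd1 Hk1]]]].
  destruct (HR c1 Hc1) as [c2 [Hc2 Hd2]].
  destruct (H2 c2 Hc2) as [y [k2 [Hy [Hd3 Hk2]]]].
  apply (D_uniq V adj Hm) in Hd1. apply (D_uniq V adj Hm) in Hd3.
  exists y. split; auto.
  pose proof (D_tri V adj Hm x c1 y). pose proof (D_tri V adj Hm c1 c2 y). lia.
Qed.

Theorem mainTheorem6
  (V : Type) (adj : V -> V -> Prop)
  (G : Type) (mul : G -> G -> G) (inv : G -> G) (e : G) (act : G -> V -> V)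
  (HX : proper_CAT0_cube_complex adj)
  (HG : is_group mul inv e)
  (Hact : is_graph_action mul e adj act)
  (Hprop : acts_properly act)
  (Hcoc : acts_cocompactly_on act (fun _ => True) (fun _ => True))
  (Y1 Y2 : V -> Prop)
  (HY1 : convex_subcomplex adj Y1) (HY2 : convex_subcomplex adj Y2)
  (HC1 : acts_cocompactly_on act (stab act Y1) Y1)
  (HC2 : acts_cocompactly_on act (stab act Y2) Y2)
  (C1 C2 : V -> Prop)
  (Hcore1 : essential_core adj act (stab act Y1) Y1 C1)
  (Hcore2 : essential_core adj act (stab act Y2) Y2 C2) :
  commensurable mul (stab act Y1) (stab act Y2) <-> parallel adj C1 C2.
Proof.
  destruct HX as [Hm Hloc]. split.
  - intros [F1 F2] a b Hab. split.
    + apply (cross_transfer G mul inv e V adj act HG Hact Hm Y1 Y2 C1 C2 a b); auto.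
    + apply (cross_transfer G mul inv e V adj act HG Hact Hm Y2 Y1 C2 C1 a b); auto.
      apply fi_swap; auto.
  - intros Hpar.
    assert (Hpar' : parallel adj C2 C1).
    { intros a b Hab. specialize (Hpar a b Hab). tauto. }
    destruct Hcore1 as [Cv1 [_ [_ [Hh1 _]]]]. destruct Hcore2 as [Cv2 [_ [_ [Hh2 _]]]].
    destruct (near_Y V adj Hm Y1 C1 C2 Y2 Cv1 Cv2 Hpar Hh1 Hh2) as [R HR].
    destruct (near_Y V adj Hm Y2 C2 C1 Y1 Cv2 Cv1 Hpar' Hh2 Hh1) as [R' HR'].
    destruct (proj1 HY1) as [p1 Hp1]. destruct (proj1 HY2) as [p2 Hp2].
    split.
    + apply (coset_fin G mul inv e V adj act HG Hact Hm Y1 Y2 R p1); auto.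
    + apply fi_swap.
      apply (coset_fin G mul inv e V adj act HG Hact Hm Y2 Y1 R' p2); auto.
Qed.
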